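(* Let $n\ge0$ and $k\ge1$ be integers, $\rho\ne0$ real, $0\le q<1$, and $z$ a complex number. Then $$\widehat c_{n,\rho,q}^{(k)}(z)=(-1)^n\sum_{m=0}^n S_1(n,m)\rho^{n-m}\sum_{i=0}^m\binom{m}{i}\frac{(-z)^i}{[m-i+1]_q^k}=(-1)^n\sum_{m=0}^n S_1\!\left(n,m,-\frac{z}{\rho}\right)\frac{\rho^{n-m}}{[m+1]_q^k}.$$
   Context: For real $0\le q<1$ (with $0^0=1$), $[x]_q=\frac{1-q^x}{1-q}$. Jackson's $q$-integral: $\int_0^1 f(x)\,d_qx=(1-q)\sum_{j\ge0} f(q^j)q^j$; multiple integrals are iterated. $(x)_n=x(x-1)\cdots(x-n+1)$, $(x)_0=1$. The $q$-poly-Cauchy polynomials of the second kind with parameter $\rho$ are $$\widehat c_{n,\rho,q}^{(k)}(z)=\rho^n\underbrace{\int_0^1\cdots\int_0^1}_{k}\left(\frac{-x_1\cdots x_k+z}{\rho}\right)_n d_qx_1\cdots d_qx_k.$$ The unsigned Stirling numbers of the first kind are defined by $x(x+1)\cdots(x+n-1)=\sum_{m=0}^n S_1(n,m)x^m$. The weighted Stirling numbers of the first kind $S_1(n,m,x)$ are defined by $\frac{(1-t)^{-x}(-\ln(1-t))^m}{m!}=\sum_{n\ge0} S_1(n,m,x)\frac{t^n}{n!}$. *)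

(* Defs.v *)
From Stdlib Require Import Reals List ClassicalEpsilon Factorial.
Open Scope R_scope.

Record Cx : Type := mkC { Re : R ; Im : R }.

Definition RtoC (r : R) : Cx := mkC r 0.
Definition C0 : Cx := RtoC 0.
Definition C1 : Cx := RtoC 1.
Definition Cadd (a b : Cx) : Cx := mkC (Re a + Re b) (Im a + Im b).
Definition Copp (a : Cx) : Cx := mkC (- Re a) (- Im a).
Definition Csub (a b : Cx) : Cx := Cadd a (Copp b).
Definition Cmul (a b : Cx) : Cx :=
  mkC (Re a * Re b - Im a * Im b) (Re a * Im b + Im a * Re b).
Definition Cscal (r : R) (a : Cx) : Cx := mkC (r * Re a) (r * Im a).
Fixpoint Cpow (a : Cx) (n : nat) : Cx :=
  match n with O => C1 | S n' => Cmul a (Cpow a n') end.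

(* csum f n = f 0 + f 1 + ... + f n   (n+1 terms) *)
Fixpoint csum (f : nat -> Cx) (n : nat) : Cx :=
  match n with O => f O | S n' => Cadd (csum f n') (f n) end.

(* finite product over i = 0 .. n-1 *)
Fixpoint cprod (f : nat -> Cx) (n : nat) : Cx :=
  match n with O => C1 | S n' => Cmul (cprod f n') (f n') end.

Definition qnum (q : R) (x : nat) : R := (1 - q ^ x) / (1 - q).

Definition cfall (x : Cx) (n : nat) : Cx :=
  cprod (fun i => Csub x (RtoC (INR i))) n.

Definition jackson_partial (q : R) (f : R -> Cx) (N : nat) : Cx :=
  Cscal (1 - q) (csum (fun j => Cscal (q ^ j) (f (q ^ j))) N).

Definition jackson_has_value (q : R) (f : R -> Cx) (L : Cx) : Prop :=
  Un_cv (fun N => Re (jackson_partial q f N)) (Re L) /\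
  Un_cv (fun N => Im (jackson_partial q f N)) (Im L).

Definition qint (q : R) (f : R -> Cx) : Cx :=
  epsilon (inhabits C0) (fun L => jackson_has_value q f L).

(* k-fold iterated Jackson integral.  The integrand receives the list
   [x_k; ...; x_1]; the outermost integral is in x_k, the innermost in x_1,
   i.e. \int_0^1 ... \int_0^1 F d_q x_1 ... d_q x_k. *)
Fixpoint qmint (q : R) (k : nat) (F : list R -> Cx) : Cx :=
  match k with
  | O => F nil
  | S k' => qint q (fun x => qmint q k' (fun xs => F (x :: xs)))
  end.

Definition prodl (xs : list R) : R := fold_right Rmult 1 xs.

Definition qpolyCauchy2 (n : nat) (rho q : R) (k : nat) (z : Cx) : Cx :=
  Cscal (rho ^ n)
    (qmint q k (fun xs => cfall (Cscal (/ rho) (Cadd (RtoC (- prodl xs)) z)) n)).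

(* polynomials with natural coefficients as coefficient sequences *)
Fixpoint nsum (f : nat -> nat) (n : nat) : nat :=
  match n with O => f O | S n' => (nsum f n' + f n)%nat end.
Definition npoly_mul (p r : nat -> nat) : nat -> nat :=
  fun m => nsum (fun i => (p i * r (m - i))%nat) m.
Definition npoly_lin (c : nat) : nat -> nat :=
  fun m => match m with O => c | 1%nat => 1%nat | _ => 0%nat end.
Fixpoint rising_poly (n : nat) : nat -> nat :=
  match n with
  | O => fun m => match m with O => 1%nat | _ => 0%nat end
  | S n' => npoly_mul (rising_poly n') (npoly_lin n')
  end.
(* x(x+1)...(x+n-1) = sum_m S1(n,m) x^m *)
Definition S1 (n m : nat) : nat := rising_poly n m.

(* formal power series in t with complex coefficients *)
Definition fps_mul (a b : nat -> Cx) : nat -> Cx :=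
  fun n => csum (fun i => Cmul (a i) (b (n - i)%nat)) n.
Fixpoint fps_pow (a : nat -> Cx) (m : nat) : nat -> Cx :=
  match m with
  | O => fun n => match n with O => C1 | _ => C0 end
  | S m' => fps_mul a (fps_pow a m')
  end.
(* (1-t)^{-x} = sum_j binom(-x, j) (-t)^j  (Newton's binomial series) *)
Definition fps_binom_neg (x : Cx) : nat -> Cx :=
  fun j => Cscal ((-1) ^ j / INR (fact j)) (cfall (Copp x) j).
(* -ln(1-t) = sum_{j>=1} t^j / j *)
Definition fps_mlog1m : nat -> Cx :=
  fun j => match j with O => C0 | _ => RtoC (/ INR j) end.
(* (1-t)^{-x} (-ln(1-t))^m / m! = sum_n S1(n,m,x) t^n / n! *)
Definition S1w (n m : nat) (x : Cx) : Cx :=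
  Cscal (INR (fact n) / INR (fact m))
    (fps_mul (fps_binom_neg x) (fps_pow fps_mlog1m m) n).

(* Main.v *)
Require Import Defs.
From Stdlib Require Import Reals.
From Stdlib Require Import Lra Lia ClassicalEpsilon FunctionalExtensionality Factorial.
Import Defs.
Open Scope R_scope.


Lemma Cx_eq (a b : Cx) : Re a = Re b -> Im a = Im b -> a = b.
Proof. destruct a, b; simpl; intros; subst; reflexivity. Qed.

Ltac Csimp := unfold C0, C1, Csub, Cscal, Cadd, Cmul, Copp, RtoC in *; cbn [Re Im] in *.
Lemma Re_add a b : Re (Cadd a b) = Re a + Re b. Proof. reflexivity. Qed.
Lemma Im_add a b : Im (Cadd a b) = Im a + Im b. Proof. reflexivity. Qed.
Lemma Re_mul a b : Re (Cmul a b) = Re a * Re b - Im a * Im b. Proof. reflexivity. Qed.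
Lemma Im_mul a b : Im (Cmul a b) = Re a * Im b + Im a * Re b. Proof. reflexivity. Qed.
Lemma Re_scal r a : Re (Cscal r a) = r * Re a. Proof. reflexivity. Qed.
Lemma Im_scal r a : Im (Cscal r a) = r * Im a. Proof. reflexivity. Qed.
Lemma Re_opp a : Re (Copp a) = - Re a. Proof. reflexivity. Qed.
Lemma Im_opp a : Im (Copp a) = - Im a. Proof. reflexivity. Qed.
Lemma Re_sub a b : Re (Csub a b) = Re a - Re b. Proof. reflexivity. Qed.
Lemma Im_sub a b : Im (Csub a b) = Im a - Im b. Proof. reflexivity. Qed.
Lemma Re_RtoC r : Re (RtoC r) = r. Proof. reflexivity. Qed.
Lemma Im_RtoC r : Im (RtoC r) = 0. Proof. reflexivity. Qed.
Lemma Re_C0 : Re C0 = 0. Proof. reflexivity. Qed.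
Lemma Im_C0 : Im C0 = 0. Proof. reflexivity. Qed.
Lemma Re_C1 : Re C1 = 1. Proof. reflexivity. Qed.
Lemma Im_C1 : Im C1 = 0. Proof. reflexivity. Qed.
Lemma Re_mk a b : Re (mkC a b) = a. Proof. reflexivity. Qed.
Lemma Im_mk a b : Im (mkC a b) = b. Proof. reflexivity. Qed.
Global Hint Rewrite Re_add Im_add Re_mul Im_mul Re_scal Im_scal Re_opp Im_opp
   Re_sub Im_sub Re_RtoC Im_RtoC Re_C0 Im_C0 Re_C1 Im_C1 Re_mk Im_mk : cx.
Ltac Cs := autorewrite with cx.
Ltac Cring := apply Cx_eq; Cs; ring.
Ltac Cfield := apply Cx_eq; Cs; field.

Lemma Re_csum f n : Re (csum f n) = sum_f_R0 (fun i => Re (f i)) n.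
Proof. induction n; simpl; auto. rewrite IHn; auto. Qed.
Lemma Im_csum f n : Im (csum f n) = sum_f_R0 (fun i => Im (f i)) n.
Proof. induction n; simpl; auto. rewrite IHn; auto. Qed.

Lemma csum_ext f g n : (forall i, (i <= n)%nat -> f i = g i) -> csum f n = csum g n.
Proof. induction n; intros H; simpl. apply H; lia. rewrite IHn, H; auto. Qed.

Lemma sum_ext f g n : (forall i, (i <= n)%nat -> f i = g i) -> sum_f_R0 f n = sum_f_R0 g n.
Proof. induction n; intros H; simpl. apply H; lia. rewrite IHn, H; auto. Qed.

Lemma sum_swap (f : nat -> nat -> R) N M :
  sum_f_R0 (fun j => sum_f_R0 (fun m => f j m) M) N =
  sum_f_R0 (fun m => sum_f_R0 (fun j => f j m) N) M.
Proof.
  induction N; simpl. reflexivity.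
  rewrite IHN. rewrite <- sum_plus. reflexivity.
Qed.

Lemma sum_scal a f n : a * sum_f_R0 f n = sum_f_R0 (fun i => a * f i) n.
Proof. induction n; simpl; auto. rewrite <- IHn; ring. Qed.

Lemma cv_sum (u : nat -> nat -> R) (l : nat -> R) M :
  (forall m, (m <= M)%nat -> Un_cv (fun N => u N m) (l m)) ->
  Un_cv (fun N => sum_f_R0 (fun m => u N m) M) (sum_f_R0 l M).
Proof.
  induction M; intros H; simpl. apply H; lia.
  apply CV_plus. apply IHM; intros; apply H; lia. apply H; lia.
Qed.

Lemma cv_const c : Un_cv (fun _ => c) c.
Proof. intros e He. exists 0%nat. intros. unfold Rdist. rewrite Rminus_diag, Rabs_R0; lra. Qed.

Lemma qnum_pos q j : 0 <= q < 1 -> 0 < 1 - q ^ (S j).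
Proof. intros Hq. pose proof (pow_lt_1_compat q (S j) Hq ltac:(lia)). lra. Qed.

Lemma geo_cv q e : 0 <= q < 1 ->
  Un_cv (fun N => (1 - q) * sum_f_R0 (fun j => q ^ j * (q ^ j) ^ e) N) (/ qnum q (e + 1)).
Proof.
  intros Hq.
  assert (Hr : Rabs (q ^ (S e)) < 1).
  { pose proof (pow_lt_1_compat q (S e) Hq ltac:(lia)). rewrite Rabs_right; lra. }
  pose proof (GP_infinite _ Hr) as G. unfold Pser, infinite_sum in G.
  replace (/ qnum q (e+1)) with ((1 - q) * / (1 - q ^ S e)).
  2:{ unfold qnum. rewrite Nat.add_1_r. pose proof (qnum_pos q e Hq). field. split; lra. }
  apply CV_mult. apply cv_const.
  intros eps Heps. destruct (G eps Heps) as [N HN]. exists N. intros n Hn.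
  specialize (HN n Hn). 
  replace (sum_f_R0 (fun j => q ^ j * (q ^ j) ^ e) n) with (sum_f_R0 (fun n0 : nat => 1 * (q ^ S e) ^ n0) n). exact HN.
  apply sum_ext. intros. rewrite <- !pow_mult. rewrite <- pow_add. rewrite Rmult_1_l. f_equal. lia.
Qed.

Definition dpoly (n : nat) (D : nat -> nat) (e : nat -> nat -> nat) (c : nat -> nat -> Cx) (y : R) : Cx :=
  csum (fun m => csum (fun i => Cscal (y ^ e m i) (c m i)) (D m)) n.

Lemma real_part_cv q n D e (r : nat -> nat -> R) : 0 <= q < 1 ->
  Un_cv (fun N => (1 - q) * sum_f_R0 (fun j => q ^ j *
      sum_f_R0 (fun m => sum_f_R0 (fun i => (q ^ j) ^ e m i * r m i) (D m)) n) N)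
   (sum_f_R0 (fun m => sum_f_R0 (fun i => / qnum q (e m i + 1) * r m i) (D m)) n).
Proof.
  intros Hq.
  apply Un_cv_ext with (fun N => sum_f_R0 (fun m => sum_f_R0 (fun i =>
     ((1 - q) * sum_f_R0 (fun j => q ^ j * (q ^ j) ^ e m i) N) * r m i) (D m)) n).
  { intros N.
    transitivity ((1-q) * sum_f_R0 (fun j => sum_f_R0 (fun m => sum_f_R0 (fun i =>
         q ^ j * (q ^ j) ^ e m i * r m i) (D m)) n) N).
    2:{ f_equal. apply sum_ext; intros j _. rewrite sum_scal. apply sum_ext; intros m _.
        rewrite sum_scal. apply sum_ext; intros i _. ring. }
    rewrite sum_swap. rewrite sum_scal. apply sum_ext; intros m _.
    rewrite sum_swap. rewrite sum_scal. apply sum_ext; intros i _.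
    rewrite (Rmult_comm _ (r m i)), <- Rmult_assoc, (Rmult_comm (r m i)), Rmult_assoc.
    f_equal. rewrite sum_scal. apply sum_ext; intros; ring. }
  apply cv_sum; intros m _. apply cv_sum; intros i _.
  apply CV_mult. apply geo_cv; auto. apply cv_const.
Qed.

Lemma Re_dpoly n D e c y : Re (dpoly n D e c y) =
  sum_f_R0 (fun m => sum_f_R0 (fun i => y ^ e m i * Re (c m i)) (D m)) n.
Proof. unfold dpoly. rewrite Re_csum. apply sum_ext; intros. rewrite Re_csum. reflexivity. Qed.
Lemma Im_dpoly n D e c y : Im (dpoly n D e c y) =
  sum_f_R0 (fun m => sum_f_R0 (fun i => y ^ e m i * Im (c m i)) (D m)) n.
Proof. unfold dpoly. rewrite Im_csum. apply sum_ext; intros. rewrite Im_csum. reflexivity. Qed.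

Lemma qint_dpoly q n D e c : 0 <= q < 1 ->
  qint q (dpoly n D e c) =
  csum (fun m => csum (fun i => Cscal (/ qnum q (e m i + 1)) (c m i)) (D m)) n.
Proof.
  intros Hq. set (L := csum _ n).
  assert (HL : jackson_has_value q (dpoly n D e c) L).
  { split.
    - unfold jackson_partial. cbn [Re Cscal].
      apply Un_cv_ext with (fun N => (1 - q) * sum_f_R0 (fun j => q ^ j *
         sum_f_R0 (fun m => sum_f_R0 (fun i => (q ^ j) ^ e m i * Re (c m i)) (D m)) n) N).
      { intros N. rewrite Re_csum. f_equal. apply sum_ext; intros. cbn [Re Cscal]. rewrite Re_dpoly. reflexivity. }
      unfold L. rewrite Re_csum.
      replace (sum_f_R0 _ n) with (sum_f_R0 (fun m => sum_f_R0 (fun i => / qnum q (e m i + 1) * Re (c m i)) (D m)) n).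
      apply real_part_cv; auto.
      apply sum_ext; intros. rewrite Re_csum. reflexivity.
    - unfold jackson_partial. cbn [Im Cscal].
      apply Un_cv_ext with (fun N => (1 - q) * sum_f_R0 (fun j => q ^ j *
         sum_f_R0 (fun m => sum_f_R0 (fun i => (q ^ j) ^ e m i * Im (c m i)) (D m)) n) N).
      { intros N. rewrite Im_csum. f_equal. apply sum_ext; intros. cbn [Im Cscal]. rewrite Im_dpoly. reflexivity. }
      unfold L. rewrite Im_csum.
      replace (sum_f_R0 _ n) with (sum_f_R0 (fun m => sum_f_R0 (fun i => / qnum q (e m i + 1) * Im (c m i)) (D m)) n).
      apply real_part_cv; auto.
      apply sum_ext; intros. rewrite Im_csum. reflexivity. }
  unfold qint. pose proof (epsilon_spec (inhabits C0) (fun L => jackson_has_value q (dpoly n D e c) L) (ex_intro _ L HL)) as H.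
  set (L' := epsilon _ _) in *. destruct H as [H1 H2]. destruct HL as [H3 H4].
  apply Cx_eq. eapply UL_sequence; eauto. eapply UL_sequence; eauto.
Qed.

Lemma qmint_dpoly q : 0 <= q < 1 -> forall k n D e c,
  qmint q k (fun xs => dpoly n D e c (prodl xs)) =
  csum (fun m => csum (fun i => Cscal (/ (qnum q (e m i + 1) ^ k)) (c m i)) (D m)) n.
Proof.
  intros Hq k. induction k; intros n D e c.
  - simpl. unfold dpoly. apply csum_ext; intros. apply csum_ext; intros.
    rewrite pow1, Rinv_1. reflexivity.
  - simpl.
    assert (E : (fun x => qmint q k (fun xs => dpoly n D e c (x * prodl xs))) =
                dpoly n D e (fun m i => Cscal (/ (qnum q (e m i + 1) ^ k)) (c m i))).
    { apply functional_extensionality; intros x.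
      replace (fun xs => dpoly n D e c (x * prodl xs)) with
         (fun xs => dpoly n D e (fun m i => Cscal (x ^ e m i) (c m i)) (prodl xs)).
      2:{ apply functional_extensionality; intros xs. unfold dpoly.
          apply csum_ext; intros; apply csum_ext; intros. rewrite Rpow_mult_distr. Cring. }
      rewrite IHk. unfold dpoly. apply csum_ext; intros; apply csum_ext; intros. Cring. }
    rewrite E, qint_dpoly by auto. apply csum_ext; intros; apply csum_ext; intros.
    apply Cx_eq; Csimp; rewrite Rinv_mult; ring.
Qed.

Lemma csum_shift f n : csum f (S n) = Cadd (f 0%nat) (csum (fun i => f (S i)) n).
Proof. induction n. simpl. reflexivity. cbn [csum] in *. rewrite IHn. Cring. Qed.

Lemma csum_plus f g n : csum (fun i => Cadd (f i) (g i)) n = Cadd (csum f n) (csum g n).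
Proof. induction n; simpl. reflexivity. rewrite IHn. Cring. Qed.

Lemma csum_mull a f n : Cmul a (csum f n) = csum (fun i => Cmul a (f i)) n.
Proof. induction n; simpl. reflexivity. rewrite <- IHn. Cring. Qed.

Lemma csum_scal r f n : Cscal r (csum f n) = csum (fun i => Cscal r (f i)) n.
Proof. induction n; simpl. reflexivity. rewrite <- IHn. Cring. Qed.

Lemma csum_zero f n : (forall i, (i <= n)%nat -> f i = C0) -> csum f n = C0.
Proof. induction n; intros H; simpl. apply H; lia. rewrite IHn by (intros; apply H; lia). rewrite H by lia. Cring. Qed.

Lemma csum_first f n : (forall i, (1 <= i <= n)%nat -> f i = C0) -> csum f n = f 0%nat.
Proof. destruct n; intros H. reflexivity. rewrite csum_shift, csum_zero. Cring. intros; apply H; lia. Qed.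

Lemma csum_last f n : (forall i, (i < n)%nat -> f i = C0) -> csum f n = f n.
Proof. destruct n; intros H. reflexivity. simpl. rewrite csum_zero. Cring. intros; apply H; lia. Qed.

Section Rising.
Variables (s : nat -> nat -> Cx) (x y : Cx).
Hypothesis h00 : s 0%nat 0%nat = C1.
Hypothesis h0S : forall m, s 0%nat (S m) = C0.
Hypothesis hS0 : forall n, s (S n) 0%nat = Cmul (Cadd x (RtoC (INR n))) (s n 0%nat).
Hypothesis hSS : forall n m, s (S n) (S m) = Cadd (Cmul (Cadd x (RtoC (INR n))) (s n (S m))) (s n m).

Lemma s_vanish : forall n m, (n < m)%nat -> s n m = C0.
Proof.
  induction n; intros m Hm; destruct m; try lia. apply h0S.
  rewrite hSS, !IHn by lia. Cring.
Qed.

Lemma rising_expand : forall n,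
  cprod (fun i => Cadd (Cadd x y) (RtoC (INR i))) n = csum (fun m => Cmul (s n m) (Cpow y m)) n.
Proof.
  induction n.
  - simpl. rewrite h00. Cring.
  - cbn [cprod]. rewrite IHn.
    set (B := csum (fun m => Cmul (s n m) (Cpow y m)) n).
    assert (HB : B = Cadd (s n 0%nat) (csum (fun m => Cmul (s n (S m)) (Cpow y (S m))) n)).
    { unfold B. transitivity (csum (fun m => Cmul (s n m) (Cpow y m)) (S n)).
      cbn [csum]. rewrite s_vanish by lia. Cring.
      rewrite csum_shift. simpl. Cring. }
    assert (HBy : Cmul B y = csum (fun m => Cmul (s n m) (Cpow y (S m))) n).
    { unfold B. transitivity (Cmul y (csum (fun m => Cmul (s n m) (Cpow y m)) n)). Cring.
      rewrite csum_mull. apply csum_ext; intros. simpl. Cring. }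
    transitivity (Cadd (Cmul (Cadd x (RtoC (INR n))) B) (Cmul B y)). Cring.
    rewrite HBy, HB. rewrite csum_shift, hS0.
    rewrite (csum_ext (fun i => Cmul (s (S n) (S i)) (Cpow y (S i))) (fun m => Cadd (Cmul (Cadd x (RtoC (INR n))) (Cmul (s n (S m)) (Cpow y (S m))))
        (Cmul (s n m) (Cpow y (S m))))).
    2:{ intros. rewrite hSS. Cring. }
    rewrite csum_plus, <- csum_mull. simpl Cpow. Cring.
Qed.
End Rising.

Lemma nsum_lin (p : nat -> nat) c m : forall j, (j <= m)%nat ->
  nsum (fun i => (p i * npoly_lin c (S m - i))%nat) j = if Nat.eqb j m then p m else 0%nat.
Proof.
  induction j; intros Hj.
  - simpl. destruct m; simpl; lia.
  - cbn [nsum]. rewrite IHj by lia. replace (Nat.eqb j m) with false by (symmetry; apply Nat.eqb_neq; lia).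
    destruct (Nat.eqb_spec (S j) m).
    + subst. replace (S (S j) - S j)%nat with 1%nat by lia. simpl. lia.
    + replace (S m - S j)%nat with (S (S (m - S j - 1)))%nat by lia. simpl. lia.
Qed.

Lemma S1_SS n m : S1 (S n) (S m) = (S1 n (S m) * n + S1 n m)%nat.
Proof.
  unfold S1. cbn [rising_poly]. unfold npoly_mul. cbn [nsum].
  rewrite nsum_lin by lia. rewrite Nat.eqb_refl. rewrite Nat.sub_diag. simpl. lia.
Qed.
Lemma S1_S0 n : S1 (S n) 0 = (S1 n 0 * n)%nat.
Proof. unfold S1. cbn [rising_poly]. unfold npoly_mul. simpl. lia. Qed.

Lemma stirling_expand v n :
  cprod (fun i => Cadd v (RtoC (INR i))) n = csum (fun m => Cscal (INR (S1 n m)) (Cpow v m)) n.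
Proof.
  pose proof (rising_expand (fun n m => RtoC (INR (S1 n m))) C0 v) as H.
  transitivity (cprod (fun i => Cadd (Cadd C0 v) (RtoC (INR i))) n).
  { f_equal. apply functional_extensionality; intros. f_equal. Cring. }
  rewrite H. apply csum_ext; intros. Cring.
  - unfold S1; simpl. Cring.
  - intros. unfold S1; simpl. Cring.
  - intros. rewrite S1_S0, mult_INR. Cring.
  - intros. rewrite S1_SS, plus_INR, mult_INR. Cring.
Qed.

Lemma Cn0 n : Binomial.C n 0 = 1.
Proof. unfold Binomial.C. rewrite Nat.sub_0_r. simpl (fact 0). pose proof (INR_fact_neq_0 n). simpl INR. field; auto. Qed.
Lemma Cnn n : Binomial.C n n = 1.
Proof. unfold Binomial.C. rewrite Nat.sub_diag. simpl (fact 0). pose proof (INR_fact_neq_0 n). simpl INR. field; auto. Qed.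

Lemma cbinom p a m : Cpow (Cadd (RtoC p) a) m =
  csum (fun i => Cscal (Binomial.C m i * p ^ (m - i)) (Cpow a i)) m.
Proof.
  induction m.
  - simpl. rewrite Cn0. Cring.
  - cbn [Cpow]. rewrite IHm. destruct m as [|m'].
    + simpl. rewrite Cn0, Cnn. unfold Binomial.C. simpl. apply Cx_eq; Csimp; field.
    + set (f := fun i => Cscal (Binomial.C (S m') i * p ^ (S m' - i)) (Cpow a i)).
      set (k := fun i => if Nat.ltb i (S m') then f (S i) else C0).
      assert (E1 : csum f (S m') = Cadd (f 0%nat) (csum (fun i => f (S i)) m')) by apply csum_shift.
      assert (E3 : csum k (S m') = csum (fun i => f (S i)) m').
      { cbn [csum]. unfold k at 2. rewrite Nat.ltb_irrefl.
        transitivity (Cadd (csum (fun i => f (S i)) m') C0). f_equal. apply csum_ext; intros.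
        unfold k. replace (Nat.ltb i (S m')) with true by (symmetry; apply Nat.ltb_lt; lia). auto. Cring. }
      transitivity (Cadd (Cmul (RtoC p) (f 0%nat)) (Cadd (Cmul (RtoC p) (csum k (S m'))) (Cmul a (csum f (S m'))))).
      { rewrite E3, E1. Cring. }
      rewrite (csum_shift (fun i => Cscal (Binomial.C (S (S m')) i * p ^ (S (S m') - i)) (Cpow a i)) (S m')).
      rewrite (csum_ext (fun i => Cscal (Binomial.C (S (S m')) (S i) * p ^ (S (S m') - S i)) (Cpow a (S i)))
        (fun i => Cadd (Cmul a (f i)) (Cmul (RtoC p) (k i)))).
      2:{ intros i Hi. unfold k, f. destruct (Nat.ltb_spec i (S m')).
          - rewrite <- (pascal (S m') i) by lia.
            replace (S (S m') - S i)%nat with (S (m' - i)) by lia.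
            replace (S m' - S i)%nat with (m' - i)%nat by lia.
            replace (S m' - i)%nat with (S (m' - i)) by lia. cbn [pow Cpow]. Cring.
          - assert (i = S m') by lia. subst. rewrite !Cnn, !Nat.sub_diag. cbn [Nat.sub pow Cpow]. Cring. }
      rewrite csum_plus, <- !csum_mull. unfold f. rewrite !Cn0.
      cbn [Nat.sub]. cbn [pow Cpow]. Cring.
Qed.

Definition Dr (a : nat -> Cx) n := Cscal (INR (S n)) (a (S n)).
Definition Sh (a : nat -> Cx) n := match n with O => C0 | S n' => a n' end.
Definition Rop a n := Csub (Dr a n) (Sh (Dr a) n).

Lemma fps_mul_ext a a' b b' : (forall n, a n = a' n) -> (forall n, b n = b' n) ->
  forall n, fps_mul a b n = fps_mul a' b' n.
Proof. intros Ha Hb n. unfold fps_mul. apply csum_ext; intros. rewrite Ha, Hb; auto. Qed.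

Lemma csum_sub f g n : csum (fun i => Csub (f i) (g i)) n = Csub (csum f n) (csum g n).
Proof. induction n; simpl. reflexivity. rewrite IHn. Cring. Qed.

Lemma fps_mul_subl a a' b n : fps_mul (fun k => Csub (a k) (a' k)) b n = Csub (fps_mul a b n) (fps_mul a' b n).
Proof. unfold fps_mul. rewrite <- csum_sub. apply csum_ext; intros; Cring. Qed.
Lemma fps_mul_addl a a' b n : fps_mul (fun k => Cadd (a k) (a' k)) b n = Cadd (fps_mul a b n) (fps_mul a' b n).
Proof. unfold fps_mul. rewrite <- csum_plus. apply csum_ext; intros; Cring. Qed.
Lemma fps_mul_subr a b b' n : fps_mul a (fun k => Csub (b k) (b' k)) n = Csub (fps_mul a b n) (fps_mul a b' n).
Proof. unfold fps_mul. rewrite <- csum_sub. apply csum_ext; intros; Cring. Qed.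
Lemma fps_mul_addr a b b' n : fps_mul a (fun k => Cadd (b k) (b' k)) n = Cadd (fps_mul a b n) (fps_mul a b' n).
Proof. unfold fps_mul. rewrite <- csum_plus. apply csum_ext; intros; Cring. Qed.
Lemma fps_mul_cl c a b n : fps_mul (fun k => Cmul c (a k)) b n = Cmul c (fps_mul a b n).
Proof. unfold fps_mul. rewrite csum_mull. apply csum_ext; intros; Cring. Qed.
Lemma fps_mul_sr c a b n : fps_mul a (fun k => Cscal c (b k)) n = Cscal c (fps_mul a b n).
Proof. unfold fps_mul. rewrite csum_scal. apply csum_ext; intros; Cring. Qed.

Lemma Dr_mul a b n : Dr (fps_mul a b) n = Cadd (fps_mul (Dr a) b n) (fps_mul a (Dr b) n).
Proof.
  unfold Dr at 1, fps_mul.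
  rewrite (csum_scal (INR (S n))).
  rewrite (csum_ext _ (fun i => Cadd (Cscal (INR i) (Cmul (a i) (b (S n - i)%nat)))
                                     (Cscal (INR (S n - i)) (Cmul (a i) (b (S n - i)%nat))))).
  2:{ intros i Hi. rewrite minus_INR by lia. Cring. }
  rewrite csum_plus. f_equal.
  - rewrite csum_shift. simpl INR at 1. transitivity (csum (fun i => Cscal (INR (S i)) (Cmul (a (S i)) (b (S n - S i)%nat))) n).
    Cring. apply csum_ext; intros. unfold Dr. replace (S n - S i)%nat with (n - i)%nat by lia. Cring.
  - cbn [csum]. rewrite Nat.sub_diag. simpl INR at 2. transitivity (csum (fun i => Cscal (INR (S n - i)) (Cmul (a i) (b (S n - i)%nat))) n).
    Cring. apply csum_ext; intros. unfold Dr. replace (S n - i)%nat with (S (n - i)) by lia. Cring.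
Qed.

Lemma Sh_mul_l a b n : Sh (fps_mul a b) n = fps_mul (Sh a) b n.
Proof.
  destruct n as [|n]; unfold fps_mul; simpl Sh.
  - simpl. Cring.
  - rewrite csum_shift. simpl Sh. transitivity (Cadd C0 (csum (fun i => Cmul (a i) (b (n - i)%nat)) n)). Cring.
    f_equal. Cring.
Qed.

Lemma Sh_mul_r a b n : Sh (fps_mul a b) n = fps_mul a (Sh b) n.
Proof.
  destruct n as [|n]; unfold fps_mul.
  - simpl. Cring.
  - change (Sh (fun n0 => csum (fun i => Cmul (a i) (b (n0 - i)%nat)) n0) (S n)) with (csum (fun i => Cmul (a i) (b (n - i)%nat)) n).
    cbn [csum]. rewrite Nat.sub_diag. change (Sh b 0) with C0.
    transitivity (Cadd (csum (fun i => Cmul (a i) (b (n - i)%nat)) n) C0). Cring. f_equal.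
    apply csum_ext; intros. replace (S n - i)%nat with (S (n - i)) by lia. reflexivity. Cring.
Qed.

Lemma Sh_ext f g n : (forall k, f k = g k) -> Sh f n = Sh g n.
Proof. intros H; destruct n; simpl; auto. Qed.

Lemma Rop_mul a b n : Rop (fps_mul a b) n = Cadd (fps_mul (Rop a) b n) (fps_mul a (Rop b) n).
Proof.
  unfold Rop at 1. rewrite Dr_mul.
  rewrite (Sh_ext _ (fun k => Cadd (fps_mul (Dr a) b k) (fps_mul a (Dr b) k))) by (intros; apply Dr_mul).
  transitivity (Cadd (Csub (fps_mul (Dr a) b n) (Sh (fps_mul (Dr a) b) n))
                     (Csub (fps_mul a (Dr b) n) (Sh (fps_mul a (Dr b)) n))).
  { destruct n; simpl; Cring. }
  rewrite Sh_mul_l, Sh_mul_r. unfold Rop. rewrite fps_mul_subl, fps_mul_subr. reflexivity.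
Qed.

Lemma Rop_eq a n : Rop a n = Csub (Cscal (INR (S n)) (a (S n))) (Cscal (INR n) (a n)).
Proof. unfold Rop, Dr. destruct n; simpl Sh. simpl INR. Cring. reflexivity. Qed.

Lemma Rop_ext a b n : (forall k, a k = b k) -> Rop a n = Rop b n.
Proof. intros H. rewrite !Rop_eq, !H. reflexivity. Qed.

Notation ell := fps_mlog1m.
Notation Lp := (fps_pow fps_mlog1m).

Lemma INRS_neq n : INR (S n) <> 0.
Proof. apply not_0_INR; lia. Qed.

Lemma Dr_ell n : Dr ell n = C1.
Proof. unfold Dr. change (fps_mlog1m (S n)) with (RtoC (/ INR (S n))). pose proof (INRS_neq n). apply Cx_eq; Cs; field; auto. Qed.

Lemma Rop_ell n : Rop ell n = Lp 0 n.
Proof.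
  unfold Rop. rewrite Dr_ell. destruct n; simpl Sh. simpl. Cring. rewrite Dr_ell. simpl. Cring.
Qed.

Lemma delta_mul b a n : fps_mul (fps_pow b 0) a n = a n.
Proof.
  unfold fps_mul. rewrite csum_first. simpl. rewrite Nat.sub_0_r. Cring.
  intros i Hi. destruct i. lia. simpl. Cring.
Qed.

Lemma Rop_delta b n : Rop (fps_pow b 0) n = C0.
Proof. rewrite Rop_eq. destruct n; simpl; Cring. Qed.

Lemma Rop_L m : forall n, Rop (Lp m) n = Cscal (INR m) (Lp (m - 1) n).
Proof.
  induction m; intros n.
  - rewrite Rop_delta. simpl INR. Cring.
  - change (Lp (S m)) with (fps_mul ell (Lp m)). rewrite Rop_mul.
    rewrite (fps_mul_ext _ (Lp 0) (Lp m) (Lp m)) by (intros; auto using Rop_ell).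
    rewrite delta_mul.
    rewrite (fps_mul_ext ell ell _ (fun k => Cscal (INR m) (Lp (m - 1) k))) by auto.
    rewrite fps_mul_sr. destruct m as [|m'].
    + simpl INR. simpl. Cring.
    + replace (S (S m') - 1)%nat with (S m') by lia. replace (S m' - 1)%nat with m' by lia.
      change (fps_mul ell (Lp m') n) with (Lp (S m') n). rewrite (S_INR (S m')). Cring.
Qed.

Section BB.
Variable x : Cx.
Notation B := (fps_binom_neg x).
Definition Aa m := fps_mul B (Lp m).

Lemma Dr_B n : Dr B n = Cmul (Cadd x (RtoC (INR n))) (B n).
Proof.
  unfold Dr, fps_binom_neg, cfall. cbn [cprod].
  set (X := cprod _ n).
  change (fact (S n)) with (S n * fact n)%nat. rewrite mult_INR.
  pose proof (INRS_neq n). pose proof (INR_fact_neq_0 n). simpl pow.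
  apply Cx_eq; Cs; field; auto.
Qed.

Lemma Rop_B n : Rop B n = Cmul x (B n).
Proof.
  rewrite Rop_eq. change (Cscal (INR (S n)) (B (S n))) with (Dr B n). rewrite Dr_B. Cring.
Qed.

Lemma Rop_A m n : Rop (Aa m) n = Cadd (Cmul x (Aa m n)) (Cscal (INR m) (Aa (m - 1) n)).
Proof.
  unfold Aa. rewrite Rop_mul.
  rewrite (fps_mul_ext _ (fun k => Cmul x (B k)) (Lp m) (Lp m)) by (intros; auto using Rop_B).
  rewrite (fps_mul_ext B B _ (fun k => Cscal (INR m) (Lp (m - 1) k))) by (intros; auto using Rop_L).
  rewrite fps_mul_cl, fps_mul_sr. reflexivity.
Qed.

Lemma A_succ m n : Aa m (S n) =
  Cscal (/ INR (S n)) (Cadd (Cmul (Cadd x (RtoC (INR n))) (Aa m n)) (Cscal (INR m) (Aa (m - 1) n))).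
Proof.
  pose proof (Rop_A m n) as H. rewrite Rop_eq in H. pose proof (INRS_neq n).
  apply Cx_eq; [apply (f_equal Re) in H | apply (f_equal Im) in H]; Cs; autorewrite with cx in H.
  - replace (Re (Aa m (S n))) with (/ INR (S n) * (INR (S n) * Re (Aa m (S n)))) by (field; auto).
    replace (INR (S n) * Re (Aa m (S n))) with (INR n * Re (Aa m n) + (Re x * Re (Aa m n) - Im x * Im (Aa m n) + INR m * Re (Aa (m - 1)%nat n))) by lra.
    ring.
  - replace (Im (Aa m (S n))) with (/ INR (S n) * (INR (S n) * Im (Aa m (S n)))) by (field; auto).
    replace (INR (S n) * Im (Aa m (S n))) with (INR n * Im (Aa m n) + (Re x * Im (Aa m n) + Im x * Re (Aa m n) + INR m * Im (Aa (m - 1)%nat n))) by lra.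
    ring.
Qed.

Lemma S1w_A n m : S1w n m x = Cscal (INR (fact n) / INR (fact m)) (Aa m n).
Proof. reflexivity. Qed.

Lemma S1w_S0 n : S1w (S n) 0 x = Cmul (Cadd x (RtoC (INR n))) (S1w n 0 x).
Proof.
  rewrite !S1w_A, A_succ. change (fact (S n)) with (S n * fact n)%nat. rewrite mult_INR.
  pose proof (INRS_neq n). pose proof (INR_fact_neq_0 n). simpl fact. simpl (INR 1). simpl (INR 0).
  apply Cx_eq; Cs; field; auto.
Qed.

Lemma S1w_SS n m : S1w (S n) (S m) x = Cadd (Cmul (Cadd x (RtoC (INR n))) (S1w n (S m) x)) (S1w n m x).
Proof.
  rewrite !S1w_A, A_succ. replace (S m - 1)%nat with m by lia.
  change (fact (S n)) with (S n * fact n)%nat. change (fact (S m)) with (S m * fact m)%nat. rewrite !mult_INR.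
  pose proof (INRS_neq n). pose proof (INRS_neq m). pose proof (INR_fact_neq_0 n). pose proof (INR_fact_neq_0 m).
  apply Cx_eq; Cs; field; auto.
Qed.

Lemma S1w_00 : S1w 0 0 x = C1.
Proof. unfold S1w, fps_mul, fps_binom_neg, cfall. simpl. apply Cx_eq; Cs; field. Qed.

Lemma S1w_0S m : S1w 0 (S m) x = C0.
Proof. unfold S1w, fps_mul. simpl. replace (fps_mul ell (Lp m) 0) with C0 by (unfold fps_mul; simpl; Cring). Cring. Qed.

Lemma rising_S1w y n :
  cprod (fun i => Cadd (Cadd x y) (RtoC (INR i))) n = csum (fun m => Cmul (S1w n m x) (Cpow y m)) n.
Proof.
  apply (rising_expand (fun n m => S1w n m x)).
  apply S1w_00. apply S1w_0S. apply S1w_S0. apply S1w_SS.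
Qed.
End BB.

Lemma cfall_neg w n : cfall w n = Cscal ((-1) ^ n) (cprod (fun i => Cadd (Copp w) (RtoC (INR i))) n).
Proof. unfold cfall. induction n; cbn [cprod]. simpl. Cring. rewrite IHn. simpl pow. Cring. Qed.

Lemma Cpow_scal r a m : Cpow (Cscal r a) m = Cscal (r ^ m) (Cpow a m).
Proof. induction m; simpl. Cring. rewrite IHm. Cring. Qed.

Lemma Cpow_RtoC r m : Cpow (RtoC r) m = RtoC (r ^ m).
Proof. induction m; simpl. reflexivity. rewrite IHm. Cring. Qed.

Lemma Cscal_Cscal r s a : Cscal r (Cscal s a) = Cscal (r * s) a.
Proof. Cring. Qed.

Lemma part1_integrand rho z n P : rho <> 0 ->
  cfall (Cscal (/ rho) (Cadd (RtoC (- P)) z)) n =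
  dpoly n (fun m => m) (fun m i => (m - i)%nat)
    (fun m i => Cscal ((-1) ^ n * INR (S1 n m) * (/ rho) ^ m * Binomial.C m i) (Cpow (Copp z) i)) P.
Proof.
  intros Hr. rewrite cfall_neg.
  replace (Copp (Cscal (/ rho) (Cadd (RtoC (- P)) z))) with (Cscal (/ rho) (Cadd (RtoC P) (Copp z))) by Cring.
  rewrite stirling_expand. unfold dpoly. rewrite csum_scal. apply csum_ext; intros m Hm.
  rewrite Cpow_scal, cbinom, !Cscal_Cscal, csum_scal. apply csum_ext; intros i Hi.
  rewrite !Cscal_Cscal. f_equal. ring.
Qed.

Lemma part2_integrand rho z n P : rho <> 0 ->
  cfall (Cscal (/ rho) (Cadd (RtoC (- P)) z)) n =
  dpoly n (fun _ => 0%nat) (fun m _ => m)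
    (fun m _ => Cscal ((-1) ^ n * (/ rho) ^ m) (S1w n m (Cscal (- / rho) z))) P.
Proof.
  intros Hr. rewrite cfall_neg.
  replace (Copp (Cscal (/ rho) (Cadd (RtoC (- P)) z))) with (Cadd (Cscal (- / rho) z) (RtoC (P / rho))).
  2:{ unfold Rdiv. Cring. }
  rewrite rising_S1w. unfold dpoly. rewrite csum_scal. apply csum_ext; intros m Hm. simpl csum.
  rewrite Cpow_RtoC. unfold Rdiv. rewrite Rpow_mult_distr. Cring.
Qed.

Theorem theorem4 (n k : nat) (rho q : R) (z : Cx) :
  (1 <= k)%nat -> rho <> 0 -> 0 <= q < 1 ->
  qpolyCauchy2 n rho q k z =
    Cscal ((-1) ^ n)
      (csum (fun m =>
         Cscal (INR (S1 n m) * rho ^ (n - m))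
           (csum (fun i =>
              Cscal (Binomial.C m i / (qnum q (m - i + 1)) ^ k) (Cpow (Copp z) i)) m)) n)
  /\
  qpolyCauchy2 n rho q k z =
    Cscal ((-1) ^ n)
      (csum (fun m =>
         Cscal (rho ^ (n - m) / (qnum q (m + 1)) ^ k)
           (S1w n m (Cscal (- / rho) z))) n).
Proof.
  intros Hk Hr Hq.
  assert (Hpow : forall m, (m <= n)%nat -> rho ^ n * (/ rho) ^ m = rho ^ (n - m)).
  { intros m Hm. replace n with ((n - m) + m)%nat at 1 by lia. rewrite pow_add, pow_inv.
    pose proof (pow_nonzero rho m Hr). field; auto. }
  unfold qpolyCauchy2. split.
  - rewrite (functional_extensionality _ _ (fun xs => part1_integrand rho z n (prodl xs) Hr)).
    rewrite (qmint_dpoly q Hq k n (fun m => m) (fun m i => (m - i)%nat)).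
    rewrite !csum_scal. apply csum_ext; intros m Hm. rewrite !Cscal_Cscal, !csum_scal.
    apply csum_ext; intros i Hi. rewrite !Cscal_Cscal. f_equal.
    rewrite <- (Hpow m Hm). unfold Rdiv. ring.
  - rewrite (functional_extensionality _ _ (fun xs => part2_integrand rho z n (prodl xs) Hr)).
    rewrite (qmint_dpoly q Hq k n (fun _ => 0%nat) (fun m _ => m)).
    rewrite !csum_scal. apply csum_ext; intros m Hm. simpl csum. rewrite !Cscal_Cscal. f_equal.
    rewrite <- (Hpow m Hm). unfold Rdiv. ring.
Qed.
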